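(* In every polyhedral model $\mathcal{P}=(|K|,V)$, the relation $\equiv_\eta$ on $|K|$ is a weak simplicial bisimulation.
   Context: Fix a set PL of proposition letters. A simplex $\sigma\subseteq\mathbb{R}^m$ is the convex hull of $d+1$ affinely independent points; its faces are the simplices spanned by nonempty subsets of its vertices; its relative interior (cell) is $\tilde\sigma=\{\sum_i\lambda_iv_i:\lambda_i\in(0,1],\sum_i\lambda_i=1\}$. A simplicial complex $K$ is a finite set of simplices in $\mathbb{R}^m$ closed under faces, any two of which intersect in a common face or in $\emptyset$. The polyhedron $|K|$ is the union of its simplices with the subspace topology; the cells partition $|K|$. A polyhedral model is $\mathcal{P}=(|K|,V)$ with $V:\mathrm{PL}\to\mathcal{P}(|K|)$, each $V(p)$ a union of cells. A topological path from $x$ is a continuous $\pi:[0,1]\to|K|$ with $\pi(0)=x$. SLCS$_\eta$ formulas: $\Phi::=p\mid\neg\Phi\mid\Phi_1\wedge\Phi_2\mid\eta(\Phi_1,\Phi_2)$; $x\models p$ iff $x\in V(p)$; negation, conjunction standard; $x\models\eta(\Phi_1,\Phi_2)$ iff some topological path $\pi$ from $x$ has $\pi(1)\models\Phi_2$ and $\pi(r)\models\Phi_1$ for all $r\in[0,1)$. $x_1\equiv_\eta x_2$ means $x_1,x_2$ satisfy the same SLCS$_\eta$ formulas. A weak simplicial bisimulation is a symmetric relation $B\subseteq|K|\times|K|$ such that whenever $B(x_1,x_2)$: (1) for all $p$, $x_1\in V(p)$ iff $x_2\in V(p)$; (2) for each topological path $\pi_1$ from $x_1$ there is a topological path $\pi_2$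 from $x_2$ with $B(\pi_1(1),\pi_2(1))$ and such that for all $r_2\in[0,1)$ there is $r_1\in[0,1)$ with $B(\pi_1(r_1),\pi_2(r_2))$. *)

(* Defs.v *)
From HB Require Import structures.
From mathcomp Require Import all_boot all_order all_algebra.
From mathcomp Require Import all_classical all_reals all_analysis.
Set Implicit Arguments.
Unset Strict Implicit.
Unset Printing Implicit Defensive.
Import Order.TTheory GRing.Theory Num.Theory.
Import numFieldNormedType.Exports.
Local Open Scope classical_set_scope.
Local Open Scope ring_scope.

Section Polyhedral.
Variables (R : realType) (m : nat).
Notation point := 'rV[R]_m.

(* A simplex is given by its (duplicate-free) list of vertices. *)
Definition aff_indep (s : seq point) : Prop :=
  forall lam : point -> R,
    \sum_(v <- s) lam v *: v = 0 -> \sum_(v <- s) lam v = 0 ->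
    forall v, v \in s -> lam v = 0.

Definition is_simplex (s : seq point) : Prop :=
  s != [::] /\ uniq s /\ aff_indep s.

Definition hull (s : seq point) : set point :=
  [set x | exists lam : point -> R,
     (forall v, v \in s -> 0 <= lam v) /\ \sum_(v <- s) lam v = 1 /\
     x = \sum_(v <- s) lam v *: v].

Definition cell (s : seq point) : set point :=
  [set x | exists lam : point -> R,
     (forall v, v \in s -> 0 < lam v <= 1) /\ \sum_(v <- s) lam v = 1 /\
     x = \sum_(v <- s) lam v *: v].

Definition is_face (t s : seq point) : Prop :=
  t != [::] /\ uniq t /\ {subset t <= s}.

Definition simplicial_complex (K : seq (seq point)) : Prop :=
  (forall s, s \in K -> is_simplex s) /\
  (forall s t, s \in K -> is_face t s -> exists2 t', t' \in K & t' =i t) /\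
  (forall s1 s2, s1 \in K -> s2 \in K ->
     hull s1 `&` hull s2 = set0 \/
     exists t, [/\ is_face t s1, is_face t s2 & hull s1 `&` hull s2 = hull t]).

Definition polyhedron (K : seq (seq point)) : set point :=
  [set x | exists2 s, s \in K & hull s x].

(* topological path in |K| from x: continuous on [0,1] (values outside
   [0,1] are irrelevant), with values in |K| *)
Definition topo_path (K : seq (seq point)) (pi : R -> point) (x : point) : Prop :=
  {within `[0, 1], continuous pi} /\
  (forall r, 0 <= r <= 1 -> polyhedron K (pi r)) /\ pi 0 = x.

Variable PL : Type.

Definition valuation_ok (K : seq (seq point)) (V : PL -> set point) : Prop :=
  forall p, exists S : seq (seq point),
    {subset S <= K} /\ V p = [set x | exists2 s, s \in S & cell s x].

Inductive formula : Type :=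
  | FAtom of PL
  | FNeg of formula
  | FAnd of formula & formula
  | FEta of formula & formula.

Fixpoint sat (K : seq (seq point)) (V : PL -> set point) (phi : formula)
  (x : point) : Prop :=
  match phi with
  | FAtom p => V p x
  | FNeg f => ~ sat K V f x
  | FAnd f g => sat K V f x /\ sat K V g x
  | FEta f g => exists pi, topo_path K pi x /\ sat K V g (pi 1) /\
                  forall r, 0 <= r < 1 -> sat K V f (pi r)
  end.

Definition eta_equiv (K : seq (seq point)) (V : PL -> set point)
  (x1 x2 : point) : Prop :=
  polyhedron K x1 /\ polyhedron K x2 /\
  forall phi, sat K V phi x1 <-> sat K V phi x2.

Definition weak_simplicial_bisimulation (K : seq (seq point))
  (V : PL -> set point) (B : point -> point -> Prop) : Prop :=
  (forall x1 x2, B x1 x2 -> polyhedron K x1 /\ polyhedron K x2) /\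
  (forall x1 x2, B x1 x2 -> B x2 x1) /\
  (forall x1 x2, B x1 x2 ->
     (forall p, V p x1 <-> V p x2) /\
     (forall pi1, topo_path K pi1 x1 ->
        exists pi2, topo_path K pi2 x2 /\ B (pi1 1) (pi2 1) /\
          forall r2, 0 <= r2 < 1 -> exists r1, 0 <= r1 < 1 /\ B (pi1 r1) (pi2 r2))).

End Polyhedral.

(* Main.v *)
Require Import Defs.
From mathcomp Require Import all_boot all_order all_algebra.
From mathcomp Require Import all_classical all_reals all_analysis.
From Stdlib Require Import Classical.
From mathcomp Require Import lra.
Set Implicit Arguments.
Unset Strict Implicit.
Unset Printing Implicit Defensive.
Import Order.TTheory GRing.Theory Num.Theory.
Import numFieldNormedType.Exports.
Local Open Scope classical_set_scope.
Local Open Scope ring_scope.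
Section Aux.
Variables (R : realType) (m : nat).
Notation point := 'rV[R]_m.

Lemma le1_of_sum (s : seq point) (lam : point -> R) v :
  (forall w, w \in s -> 0 <= lam w) -> \sum_(w <- s) lam w = 1 -> v \in s ->
  lam v <= 1.
Proof.
move=> h0 h1 vs; rewrite -h1 (big_rem v vs) /= lerDl.
by rewrite big_seq; apply: sumr_ge0 => w /mem_rem; apply: h0.
Qed.

Lemma sum_sub_cond (V : nmodType) (s t : seq point) (F : point -> V) :
  uniq s -> uniq t -> {subset t <= s} ->
  \sum_(v <- s) (if v \in t then F v else 0) = \sum_(v <- t) F v.
Proof.
move=> us ut ts; rewrite -big_mkcond -big_filter; apply: perm_big.
apply: uniq_perm; first exact: filter_uniq.
  exact: ut.
move=> v; rewrite mem_filter; case vt: (v \in t) => //=.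
exact: ts.
Qed.

Lemma cell_hull (s : seq point) x : cell s x -> hull s x.
Proof.
case=> lam [h1 [h2 h3]]; exists lam; split => // v /h1 /andP[/ltW]//.
Qed.

Lemma cell_perm (s t : seq point) x : uniq s -> uniq t -> s =i t ->
  cell s x -> cell t x.
Proof.
move=> us ut st [lam [h1 [h2 h3]]]; have p := uniq_perm us ut st.
exists lam; split; first by move=> v; rewrite -st; apply: h1.
by rewrite -(perm_big _ p) -(perm_big _ p).
Qed.

Lemma cell_convex (s : seq point) x y a : cell s x -> cell s y ->
  0 <= a <= 1 -> cell s ((1 - a) *: y + a *: x).
Proof.
move=> [lx [hx1 [hx2 hx3]]] [ly [hy1 [hy2 hy3]]] /andP[a0 a1].
have key : \sum_(v <- s) ((1 - a) * ly v + a * lx v) = 1.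
  by rewrite big_split /= -!mulr_sumr hx2 hy2 !mulr1 subrK.
exists (fun v => (1 - a) * ly v + a * lx v); split; last split => //.
  move=> v vs; apply/andP; split.
    have /andP[lx0 _] := hx1 v vs; have /andP[ly0 _] := hy1 v vs.
    have [a1'|a1'] := ltP a 1.
      have h1 : 0 < (1 - a) * ly v by apply: mulr_gt0; rewrite ?subr_gt0.
      have h2 : 0 <= a * lx v by apply: mulr_ge0 => //; apply: ltW.
      lra.
    have -> : a = 1 by apply/eqP; rewrite eq_le a1 a1'.
    by rewrite subrr mul0r add0r mul1r.
  apply: (@le1_of_sum s (fun w => (1 - a) * ly w + a * lx w)) => // w ws.
  have /andP[lx0 _] := hx1 w ws; have /andP[ly0 _] := hy1 w ws.
  have h1 : 0 <= (1 - a) * ly w by apply: mulr_ge0; [rewrite subr_ge0 | apply: ltW].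
  have h2 : 0 <= a * lx w by apply: mulr_ge0 => //; apply: ltW.
  lra.
rewrite hx3 hy3 !scaler_sumr -big_split /=; apply: eq_bigr => v _.
by rewrite !scalerA scalerDl.
Qed.

Lemma lin_cont (a b : R) : continuous (fun r : R => a * r + b).
Proof.
move=> x; apply: cvgD; last exact: cvg_cst.
by apply: cvgM; [exact: cvg_cst | exact: cvg_id].
Qed.
Lemma mul_cont (a : R) : continuous (fun r : R => a * r).
Proof. by move=> x; apply: cvgM; [exact: cvg_cst | exact: cvg_id]. Qed.
Lemma h_cont : continuous (fun r : R => Num.max 0 (2 * r - 1)).
Proof.
move=> x.
have := @continuous_max R R (fun=> 0) (fun r => 2 * r + (- 1)) x (@cst_continuous R R 0 x) (@lin_cont _ _ x).
by [].
Qed.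
Lemma k_cont : continuous (fun r : R => 1 - Num.min 1 (2 * r)).
Proof.
move=> x; apply: cvgD; first exact: cvg_cst.
apply: cvgN.
exact: (@continuous_min R R (fun=> 1) (fun r => 2 * r) x (@cst_continuous R R 1 x) (@mul_cont _ x)).
Qed.

Lemma comp_within (f : R -> point) (h : R -> R) (A B : set R) :
  {within B, continuous f} -> continuous h -> (forall r, A r -> B (h r)) ->
  {within A, continuous (f \o h)}.
Proof.
move=> cf ch hAB; apply/subspace_continuousP => r Ar.
move/subspace_continuousP : cf => /(_ (h r) (hAB r Ar)) cf.
rewrite /from_subspace in cf *.
suff hc : h x @[x --> within A (nbhs r)] --> within B (nbhs (h r)).
  exact: (cvg_comp _ _ hc cf).
move=> W /= [e /= e0 hW].
have := ch r; move=> /(_ [set z | B z -> W z]) H.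
have : nbhs (h r) [set z | B z -> W z] by exists e.
move=> /H {}H.
change (nbhs r (fun z => A z -> W (h z))).
exact: (filterS (fun z hz Az => hz (hAB z Az)) H).
Qed.

Lemma seg_eq (x y : point) (a : R) : x + (1 - a) *: (y - x) = (1 - a) *: y + a *: x.
Proof.
rewrite scalerBr [(1 - a) *: x]scalerBl scale1r opprB addrCA; congr (_ + _).
by rewrite addrCA subrr addr0.
Qed.

Definition prep (pi : R -> point) (x y : point) : R -> point :=
  fun r => pi (Num.max 0 (2 * r - 1)) + (1 - Num.min 1 (2 * r)) *: (y - x).

Lemma prep_cont (pi : R -> point) x y :
  {within `[0, 1], continuous pi} -> {within `[0, 1], continuous (prep pi x y)}.
Proof.
move=> cpi.
have c1 : {within `[0, 1], continuous (pi \o (fun r : R => Num.max 0 (2 * r - 1)))}.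
  apply: comp_within cpi h_cont _ => r; rewrite /= !in_itv /= => /andP[r0 r1].
  rewrite le_max lexx /= ge_max ler01 /=; lra.
apply/subspace_continuousP => r Ar.
move/subspace_continuousP : c1 => /(_ r Ar) c1.
apply: cvgD => //.
apply: cvg_within_filter.
apply: cvgZr_tmp; exact: k_cont.
Qed.

Variable K : seq (seq point).
Hypothesis hK : simplicial_complex K.

Lemma hull_cell (s : seq point) x : s \in K -> hull s x ->
  exists2 t, t \in K & cell t x.
Proof.
case: hK => hs [hf _] sK [lam [h0 [h1 h2]]].
have [_ [us _]] := hs s sK.
pose t := [seq v <- s | 0 < lam v].
have split_sum (V : nmodType) (F : point -> V) :
    (forall v, v \in s -> ~~ (0 < lam v) -> F v = 0) ->
    \sum_(v <- s) F v = \sum_(v <- t) F v.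
  move=> hF; rewrite big_filter [LHS](bigID (fun v => 0 < lam v)) /=.
  rewrite [X in _ + X = _]big_seq_cond [X in _ + X = _]big1 ?addr0 // => v /andP[vs nv].
  exact: hF.
have lam0 v : v \in s -> ~~ (0 < lam v) -> lam v = 0.
  move=> vs; rewrite lt_neqAle h0 // andbT negbK => /eqP <-//.
have st1 : \sum_(v <- t) lam v = 1 by rewrite -split_sum.
have st2 : x = \sum_(v <- t) lam v *: v.
  by rewrite h2 split_sum // => v vs nv; rewrite lam0 // scale0r.
have ft : is_face t s.
  split; last split; first by apply/eqP => t0; move: st1; rewrite t0 big_nil; apply/eqP; rewrite eq_sym oner_eq0.
    exact: filter_uniq.
  by move=> v; rewrite mem_filter => /andP[].
have [t' t'K t't] := hf s t sK ft.
exists t' => //; apply: (@cell_perm t); first exact: filter_uniq.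
  by have [_ []] := hs t' t'K.
  by move=> v; rewrite t't.
exists lam; split; last by split.
move=> v; rewrite mem_filter => /andP[lv vs]; rewrite lv /=.
apply: (@le1_of_sum t) => //; last by rewrite mem_filter lv.
by move=> w; rewrite mem_filter => /andP[/ltW].
Qed.

Lemma cell_sub (s s' : seq point) x : s \in K -> s' \in K ->
  cell s x -> cell s' x -> {subset s <= s'}.
Proof.
case: hK => hs [hf hi] sK s'K cx cx'.
have [_ [us ais]] := hs s sK.
case: (hi s s' sK s'K) => [h0|[t [[_ [ut ts]] [_ [_ ts']] ht]]].
  have : (hull s `&` hull s') x by split; apply: cell_hull.
  by rewrite h0.
have : hull t x by rewrite -ht; split; apply: cell_hull.
case=> mu [_ [mu1 xmu]].
case: cx => lam [l0 [l1 l2]].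
pose lam' v := lam v - (if v \in t then mu v else 0).
have e1 : \sum_(v <- s) lam' v *: v = 0.
  under eq_bigr do rewrite scalerBl.
  rewrite sumrB -l2.
  under eq_bigr do rewrite (fun_if (fun c => c *: _)) scale0r.
  by rewrite sum_sub_cond // -xmu subrr.
have e2 : \sum_(v <- s) lam' v = 0.
  by rewrite sumrB sum_sub_cond // l1 mu1 subrr.
move=> v vs; have := ais lam' e1 e2 v vs; rewrite /lam'.
case vt: (v \in t); first by move=> _; apply: ts'.
have /andP[lv _] := l0 v vs; rewrite subr0 => lv0; move: lv; rewrite lv0 ltxx.
by [].
Qed.


Lemma cell_same (s s' : seq point) x y : s \in K -> s' \in K ->
  cell s x -> cell s' x -> cell s y -> cell s' y.
Proof.
move=> sK s'K cx cx' cy.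
have h1 := cell_sub sK s'K cx cx'; have h2 := cell_sub s'K sK cx' cx.
case: hK => hs _.
have [_ [us _]] := hs s sK; have [_ [us' _]] := hs s' s'K.
apply: (cell_perm us us') cy => v; apply/idP/idP; [exact: h1 | exact: h2].
Qed.

Lemma prep_path (pi : R -> point) x y (s : seq point) : topo_path K pi x ->
  s \in K -> cell s x -> cell s y ->
  [/\ topo_path K (prep pi x y) y, prep pi x y 1 = pi 1 &
   forall r, 0 <= r < 1 -> cell s (prep pi x y r) \/
     exists2 r', 0 <= r' < 1 & prep pi x y r = pi r'].
Proof.
case=> [cpi [ppi pi0]] sK cx cy.
have Hlo r : 2 * r <= 1 -> prep pi x y r = (1 - 2 * r) *: y + (2 * r) *: x.
  move=> r1; rewrite /prep max_l; last by lra.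
  by rewrite min_r // pi0 seg_eq.
have Hhi r : 1 <= 2 * r -> prep pi x y r = pi (2 * r - 1).
  move=> r1; rewrite /prep max_r; last by lra.
  by rewrite min_l // subrr scale0r addr0.
have Hcell r : 0 <= r -> 2 * r <= 1 -> cell s (prep pi x y r).
  move=> r0 r1; rewrite Hlo //; apply: cell_convex => //; apply/andP; lra.
split.
- split; first exact: prep_cont.
  split.
    move=> r /andP[r0 r1]; case: (leP (2 * r) 1) => h.
      by exists s => //; apply: cell_hull; apply: Hcell.
    rewrite Hhi; last by lra.
    apply: ppi; apply/andP; lra.
  rewrite Hlo; last by lra.
  by rewrite mulr0 subr0 scale1r scale0r addr0.
- rewrite Hhi; last by lra.
  by congr pi; lra.
- move=> r /andP[r0 r1]; case: (leP (2 * r) 1) => h.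
    by left; apply: Hcell.
  right; exists (2 * r - 1); first by apply/andP; lra.
  by rewrite Hhi //; lra.
Qed.


Variable PL : Type.
Variable V : PL -> set point.
Hypothesis hV : valuation_ok K V.

Lemma sat_cell (phi : formula PL) : forall (s : seq point) x y, s \in K ->
  cell s x -> cell s y -> sat K V phi x -> sat K V phi y.
Proof.
elim: phi => [p|f IH|f IHf g IHg|f IHf g IHg] s x y sK cx cy /=.
- have [S [SK VS]] := hV p; rewrite VS => -[s' s'S cs'x].
  exists s' => //; exact: (cell_same sK (SK _ s'S) cx cs'x cy).
- by move=> nx sy; apply: nx; apply: (IH s y x).
- by case=> a b; split; [exact: (IHf s x y) | exact: (IHg s x y)].
- case=> pi [tp [gpi fpi]].
  have [tp' e1 hr] := prep_path tp sK cx cy.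
  have pi0 : pi 0 = x by case: tp => [_ []].
  exists (prep pi x y); split => //; split; first by rewrite e1.
  move=> r hr0; case: (hr r hr0) => [c | [r' hr' ->]]; last exact: fpi.
  apply: (IHf s x) => //; rewrite -pi0; apply: fpi; rewrite lexx ltr01.
  by [].
Qed.


Variable p0 : PL.
Local Notation sat' := (sat K V).

Definition ftop : formula PL := FNeg (FAnd (FAtom p0) (FNeg (FAtom p0))).
Lemma sat_top x : sat' ftop x.
Proof. by move=> /= [a b]. Qed.

Definition bigand (l : seq (formula PL)) := foldr (@FAnd PL) ftop l.

Lemma sat_bigand (F : seq point -> formula PL) (l : seq (seq point)) x :
  sat' (bigand (map F l)) x <-> forall s, s \in l -> sat' (F s) x.
Proof.
elim: l => [|a l IH] /=; first by split => // _; exact: sat_top.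
split.
  case=> h1 /IH h2 s; rewrite in_cons => /orP[/eqP -> //|]; exact: h2.
move=> h; split; first by apply: h; rewrite mem_head.
by apply/IH => s sl; apply: h; rewrite in_cons sl orbT.
Qed.

Definition bigor (F : seq point -> formula PL) (l : seq (seq point)) :=
  FNeg (bigand (map (fun s => FNeg (F s)) l)).

Lemma sat_bigor (F : seq point -> formula PL) (l : seq (seq point)) x :
  sat' (bigor F l) x <-> exists2 s, s \in l & sat' (F s) x.
Proof.
rewrite /bigor /=; split.
  move=> h; apply: NNPP => nh; apply: h; apply/sat_bigand => s sl /= fs.
  by apply: nh; exists s.
by case=> s sl fs /sat_bigand /(_ s sl) /=; apply.
Qed.

Definition sepP (s t : seq point) :=
  exists phi : formula PL, (forall x, cell s x -> sat' phi x) /\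
    (forall y, cell t y -> ~ sat' phi y).

Definition dist (s t : seq point) : formula PL :=
  match pselect (sepP s t) with
  | left H => proj1_sig (cid H)
  | right _ => ftop
  end.

Lemma dist_good s t x : cell s x -> sat' (dist s t) x.
Proof.
rewrite /dist; case: pselect => [H|_] cx; last exact: sat_top.
by case: (cid H) => phi [h _] /=; apply: h.
Qed.

Lemma dist_sep s t y : sepP s t -> cell t y -> ~ sat' (dist s t) y.
Proof.
rewrite /dist; case: pselect => [H|//] _ cy.
by case: (cid H) => phi [_ h] /=; apply: h.
Qed.

Definition chi (s : seq point) := bigand (map (dist s) K).

Lemma chi_self s x : cell s x -> sat' (chi s) x.
Proof. by move=> cx; apply/sat_bigand => t _; apply: dist_good. Qed.

Lemma chi_iff s x0 y : s \in K -> cell s x0 -> polyhedron K y ->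
  sat' (chi s) y -> forall phi, sat' phi x0 <-> sat' phi y.
Proof.
move=> sK cx0 [t0 t0K ht0] hy.
have [t tK cy] := hull_cell t0K ht0.
apply: NNPP => H; have [phi Hphi] := not_all_ex_not _ _ H.
have [psi [p1 p2]] : exists psi, sat' psi x0 /\ ~ sat' psi y.
  case: (classic (sat' phi x0)) => h.
    by exists phi; split => // hy'; apply: Hphi; split => _.
  exists (FNeg phi); split => // /= hy'; apply: Hphi.
  by split => [/h|/hy'].
have sp : sepP s t.
  exists psi; split.
    by move=> x cx; apply: (sat_cell sK cx0 cx).
  by move=> z cz hz; apply: p2; apply: (sat_cell tK cz cy).
have := dist_sep sp cy; apply.
by move/sat_bigand: hy; apply.
Qed.


Lemma main_inh : weak_simplicial_bisimulation K V (eta_equiv K V).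
Proof.
split; first by move=> x1 x2 [? [? _]].
split.
  move=> x1 x2 [a [b c]]; split => //; split => // phi.
  by split; [exact: (proj2 (c phi)) | exact: (proj1 (c phi))].
move=> x1 x2 [px1 [px2 eq]]; split.
  by move=> p; exact: (eq (FAtom p)).
move=> pi1 tp1.
have pi1K r : 0 <= r <= 1 -> polyhedron K (pi1 r) by move=> hr; case: tp1 => [_ [h _]]; exact: h r hr.
have [s1 s1K c1] : exists2 s1, s1 \in K & cell s1 (pi1 1).
  have [t tK ht] := pi1K 1 (ltac:(by rewrite ler01 lexx)).
  exact: hull_cell tK ht.
pose S := [seq s <- K | `[< exists2 r, 0 <= r < 1 & cell s (pi1 r) >]].
pose Psi := FEta (bigor chi S) (chi s1).
have h1 : sat' Psi x1.
  exists pi1; split => //; split; first exact: chi_self.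
  move=> r hr; apply/sat_bigor.
  have hr' : 0 <= r <= 1 by move: hr => /andP[a b]; rewrite a ltW.
  have [t tK ht] := pi1K r hr'.
  have [u uK cu] := hull_cell tK ht.
  exists u; last exact: chi_self.
  by rewrite mem_filter uK andbT; apply/asboolP; exists r.
have [pi2 [tp2 [c2 c3]]] := (proj1 (eq Psi)) h1.
have pi2K r : 0 <= r <= 1 -> polyhedron K (pi2 r) by move=> hr; case: tp2 => [_ [h _]]; exact: h r hr.
exists pi2; split => //; split.
  split; first by apply: pi1K; rewrite ler01 lexx.
  split; first by apply: pi2K; rewrite ler01 lexx.
  by apply: (chi_iff s1K c1 _ c2); apply: pi2K; rewrite ler01 lexx.
move=> r2 hr2; have /sat_bigor [s sS cs] := c3 r2 hr2.
have hr2' : 0 <= r2 <= 1 by move: hr2 => /andP[a b]; rewrite a ltW.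
move: sS; rewrite mem_filter => /andP[/asboolP [r1 hr1 cr1] sK].
exists r1; split => //; split.
  by exists s => //; exact: cell_hull.
split; first exact: pi2K.
exact: (chi_iff sK cr1 (pi2K r2 hr2') cs).
Qed.

End Aux.

Lemma formula_empty (PL : Type) : ~ inhabited PL -> formula PL -> False.
Proof. by move=> h; elim => // p; apply: h; constructor. Qed.

Theorem lemma11 (R : realType) (m : nat) (PL : Type)
  (K : seq (seq 'rV[R]_m)) (V : PL -> set 'rV[R]_m) :
  simplicial_complex K -> valuation_ok K V ->
  weak_simplicial_bisimulation K V (eta_equiv K V).
Proof.
move=> hK hV; case: (classic (inhabited PL)) => [[p0]|nPL].
  exact: main_inh.
split; first by move=> x1 x2 [? [? _]].
split.
  move=> x1 x2 [a [b c]]; split => //; split => // phi.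
  by case: (formula_empty nPL phi).
move=> x1 x2 [px1 [px2 eq]]; split.
  by move=> p; case: nPL; constructor.
move=> pi1 tp1.
have pi1K r : 0 <= r <= 1 -> polyhedron K (pi1 r) by move=> hr; case: tp1 => [_ [h _]]; exact: h r hr.
exists (fun _ => x2); split.
  split; first by apply: continuous_subspaceT => t; apply: cst_continuous.
  by split.
split.
  split; first by apply: pi1K; rewrite ler01 lexx.
  by split => // phi; case: (formula_empty nPL phi).
move=> r2 _; exists 0; split; first by rewrite lexx ltr01.
split; first by apply: pi1K; rewrite lexx ler01.
by split => // phi; case: (formula_empty nPL phi).
Qed.
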